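(* Let $\Lambda\subset\mathbb{R}^3$ be a set of points with $0\in\Lambda$ and $|u-u'|\ge 2$ for all distinct $u,u'\in\Lambda$. Let $v_1,\dots,v_n\in\Lambda$ satisfy $2\le |v_i|\le 2.51$ for all $i$. Suppose that the radial projections of $v_1,\dots,v_n$ to the unit sphere, taken in this cyclic order, are the corners of a simple closed spherical polygon whose sides are the radial projections of the segments $[v_i,v_{i+1}]$ (indices mod $n$), and that this polygon bounds a convex region on the unit sphere, i.e. all its interior angles are less than $\pi$. Then $n\le 7$.
   Context: Throughout, points of $\Lambda$ are the centers of a packing of unit balls; the height of a point $v$ is $|v|$. In the paper this polygon is a convex subregion of a standard region: its corners are packing centers of height at most $2.51$ and its bounding edges are segments between consecutive corners. A spherical region is called convex if all of its interior angles are less than $\pi$. *)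

(* Defs.v *)
From HB Require Import structures.
From mathcomp Require Import all_boot all_order all_algebra.
From mathcomp Require Import reals.
Set Implicit Arguments. Unset Strict Implicit. Unset Printing Implicit Defensive.
Import Order.TTheory GRing.Theory Num.Theory.
Local Open Scope ring_scope.

Section Defs.
Variable R : realType.
Notation pt := 'rV[R]_3.

Definition enorm (u : pt) : R := Num.sqrt (\sum_(k < 3) u 0 k ^+ 2).
Definition edist (u w : pt) : R := enorm (u - w).

Definition radproj (u : pt) : pt := (enorm u)^-1 *: u.

(* Triple product det[a; b; c]: its sign tells on which side of the great
   circle through a and b (the plane spanned by a, b) the point c lies. *)
Definition det3 (a b c : pt) : R :=
  a 0 0 * (b 0 1 * c 0 2 - b 0 2 * c 0 1)
  - a 0 1 * (b 0 0 * c 0 2 - b 0 2 * c 0 0)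
  + a 0 2 * (b 0 0 * c 0 1 - b 0 1 * c 0 0).

Definition packing_with_origin (Lam : pt -> Prop) : Prop :=
  Lam 0 /\ forall u w, Lam u -> Lam w -> u <> w -> 2 <= edist u w.

(* The points p_0, ..., p_(n-1) of the unit sphere, in this cyclic order
   (successor of i is ordS i, i.e. i+1 mod n), are the corners of a simple
   closed spherical polygon with sides the great-circle arcs [p_i, p_(i+1)]
   bounding a convex region (all interior angles < pi): equivalently, for a
   consistent orientation, every corner other than p_i, p_(i+1) lies strictly
   on the inner side of the great circle carrying the side [p_i, p_(i+1)]. *)
Definition convex_spherical_polygon (n : nat) (p : 'I_n -> pt) : Prop :=
  (3 <= n)%N /\
  ((forall i j : 'I_n, j != i -> j != ordS i -> 0 < det3 (p i) (p (ordS i)) (p j))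
   \/
   (forall i j : 'I_n, j != i -> j != ordS i -> det3 (p i) (p (ordS i)) (p j) < 0)).

End Defs.

(* Main.v *)
Require Import Defs.
From HB Require Import structures.
From mathcomp Require Import all_boot all_order all_algebra.
From mathcomp Require Import reals.
From mathcomp Require Import ring lra zify.
From mathcomp Require Import trigo.
Import Order.TTheory GRing.Theory Num.Theory.
Local Open Scope ring_scope.
Set Implicit Arguments. Unset Strict Implicit. Unset Printing Implicit Defensive.
Lemma acos_in (R : realType) (x : R) : -1 <= x <= 1 -> acos x \in `[0, pi].
Proof. by move=> h; rewrite in_itv /= acos_ge0 // acos_lepi. Qed.

Lemma acos_le (R : realType) (x y : R) : -1 <= x <= 1 -> -1 <= y <= 1 ->
  x <= y -> acos y <= acos x.
Proof.
move=> hx hy hxy; rewrite leNgt; apply/negP => H.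
have := ltr_cos (acos_in hx) (acos_in hy).
rewrite H !acosK ?in_itv //= => /esym.
by rewrite ltNge hxy.
Qed.

Lemma cos_in (R : realType) (x : R) : -1 <= cos x <= 1.
Proof. by rewrite cos_geN1 cos_le1. Qed.

Lemma tri_scalar (R : realType) (r s t : R) : -1 <= r <= 1 -> -1 <= s <= 1 ->
  -1 <= t <= 1 -> 0 <= 1 + 2*r*s*t - r^+2 - s^+2 - t^+2 ->
  acos r <= acos s + acos t.
Proof.
move=> hr hs ht hg.
have [h|h] := lerP pi (acos s + acos t).
  exact: le_trans (acos_lepi hr) h.
have hab : (acos s + acos t) \in `[0, pi].
  by rewrite in_itv /= (ltW h) addr_ge0 // acos_ge0.
rewrite -(cosK hab); apply: acos_le => //; first exact: cos_in.
rewrite cosD !acosK ?in_itv //= !sin_acos //.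
have h1 : 0 <= 1 - s^+2 by nra.
have h2 : 0 <= 1 - t^+2 by nra.
rewrite -sqrtrM //.
have [h3|h3] := lerP (s*t - r) 0.
  have := sqrtr_ge0 ((1 - s ^+ 2) * (1 - t ^+ 2)); lra.
suff : s*t - r <= Num.sqrt ((1 - s ^+ 2) * (1 - t ^+ 2)) by lra.
rewrite -(ger0_norm (ltW h3)) -sqrtr_sqr; apply: ler_wsqrtr; nra.
Qed.

Lemma add_scalar (R : realType) (r a b : R) : -1 <= r <= 1 -> 0 <= a -> 0 <= b ->
  a^+2 + b^+2 + 2*a*b*r = 1 ->
  acos r = acos (a + b*r) + acos (a*r + b).
Proof.
move=> hr ha hb hn.
have e1 : 1 - (a + b*r)^+2 = b^+2 * (1 - r^+2) by rewrite -[X in X - _ = _]hn; ring.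
have e2 : 1 - (a*r + b)^+2 = a^+2 * (1 - r^+2) by rewrite -[X in X - _ = _]hn; ring.
have h0 : 0 <= 1 - r^+2 by nra.
have hs : -1 <= a + b*r <= 1.
  have h5 : 0 <= b^+2 * (1 - r^+2) by apply: mulr_ge0; nra.
  have h : (a + b*r)^+2 <= 1 by lra.
  apply/andP; split; nra.
have ht : -1 <= a*r + b <= 1.
  have h5 : 0 <= a^+2 * (1 - r^+2) by apply: mulr_ge0; nra.
  have h : (a*r + b)^+2 <= 1 by lra.
  apply/andP; split; nra.
have hab : (acos (a + b*r) + acos (a*r + b)) \in `[0, pi].
  rewrite in_itv /= addr_ge0 ?acos_ge0 //=.
  have : acos (a*r + b) <= acos (- (a + b*r)).
    apply: acos_le => //; first by apply/andP; split; lra.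
    nra.
  rewrite acosN //; lra.
rewrite -[in RHS](cosK hab) cosD !acosK ?in_itv //= !sin_acos // e1 e2.
rewrite -sqrtrM ?mulr_ge0 ?sqr_ge0 //.
have -> : b^+2 * (1 - r^+2) * (a^+2 * (1 - r^+2)) = (a*b*(1-r^+2))^+2 by ring.
rewrite sqrtr_sqr ger0_norm ?mulr_ge0 //.
congr acos; apply/eqP; rewrite eq_sym -subr_eq0.
have -> : (a + b * r) * (a * r + b) - a * b * (1 - r ^+ 2) - r =
  r * ((a^+2 + b^+2 + 2*a*b*r) - 1) by ring.
by rewrite hn subrr mulr0.
Qed.

Definition dot (R : realType) (u w : 'rV[R]_3) : R :=
  u 0 0 * w 0 0 + u 0 1 * w 0 1 + u 0 2 * w 0 2.
Definition uang (R : realType) (u w : 'rV[R]_3) : R := acos (dot u w).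
Definition lin3 (R : realType) (q : 'rV[R]_3) (a : R) (u : 'rV[R]_3) (b : R) (w : 'rV[R]_3) :=
  [/\ q 0 0 = a * u 0 0 + b * w 0 0, q 0 1 = a * u 0 1 + b * w 0 1
    & q 0 2 = a * u 0 2 + b * w 0 2].

Lemma dotC (R : realType) (u w : 'rV[R]_3) : dot u w = dot w u.
Proof. rewrite /dot; ring. Qed.

Lemma uangC (R : realType) (u w : 'rV[R]_3) : uang u w = uang w u.
Proof. by rewrite /uang dotC. Qed.

Lemma dot_lin3l (R : realType) (q u w x : 'rV[R]_3) a b :
  lin3 q a u b w -> dot q x = a * dot u x + b * dot w x.
Proof. by case=> h0 h1 h2; rewrite /dot h0 h1 h2; ring. Qed.

Lemma det_lin3_1 (R : realType) (q u w x y : 'rV[R]_3) a b :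
  lin3 q a u b w -> det3 q x y = a * det3 u x y + b * det3 w x y.
Proof. by case=> h0 h1 h2; rewrite /det3 h0 h1 h2; ring. Qed.
Lemma det_lin3_2 (R : realType) (q u w x y : 'rV[R]_3) a b :
  lin3 q a u b w -> det3 x q y = a * det3 x u y + b * det3 x w y.
Proof. by case=> h0 h1 h2; rewrite /det3 h0 h1 h2; ring. Qed.
Lemma det_lin3_3 (R : realType) (q u w x y : 'rV[R]_3) a b :
  lin3 q a u b w -> det3 x y q = a * det3 x y u + b * det3 x y w.
Proof. by case=> h0 h1 h2; rewrite /det3 h0 h1 h2; ring. Qed.

Lemma det3_cyc (R : realType) (x y z : 'rV[R]_3) : det3 x y z = det3 y z x.
Proof. rewrite /det3; ring. Qed.
Lemma det3_swap (R : realType) (x y z : 'rV[R]_3) : det3 x y z = - det3 y x z.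
Proof. rewrite /det3; ring. Qed.
Lemma det3_rep12 (R : realType) (x z : 'rV[R]_3) : det3 x x z = 0.
Proof. rewrite /det3; ring. Qed.
Lemma det3_rep13 (R : realType) (x z : 'rV[R]_3) : det3 x z x = 0.
Proof. rewrite /det3; ring. Qed.
Lemma det3_rep23 (R : realType) (x z : 'rV[R]_3) : det3 z x x = 0.
Proof. rewrite /det3; ring. Qed.

Lemma dot_bound (R : realType) (u w : 'rV[R]_3) :
  dot u u = 1 -> dot w w = 1 -> -1 <= dot u w <= 1.
Proof.
move=> hu hw.
have key : dot u u * dot w w - (dot u w)^+2 =
  (u 0 0 * w 0 1 - u 0 1 * w 0 0)^+2 + (u 0 0 * w 0 2 - u 0 2 * w 0 0)^+2
  + (u 0 1 * w 0 2 - u 0 2 * w 0 1)^+2 by rewrite /dot; ring.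
rewrite hu hw mul1r in key.
have : (dot u w)^+2 <= 1.
  have := sqr_ge0 (u 0 0 * w 0 1 - u 0 1 * w 0 0).
  have := sqr_ge0 (u 0 0 * w 0 2 - u 0 2 * w 0 0).
  have := sqr_ge0 (u 0 1 * w 0 2 - u 0 2 * w 0 1). lra.
move=> h; apply/andP; split; nra.
Qed.

Lemma gram (R : realType) (u z w : 'rV[R]_3) :
  dot u u = 1 -> dot z z = 1 -> dot w w = 1 ->
  0 <= 1 + 2 * dot u w * dot u z * dot z w - dot u w ^+2 - dot u z ^+2 - dot z w ^+2.
Proof.
move=> hu hz hw.
have key : dot u u * dot z z * dot w w + 2 * dot u w * dot u z * dot z w
  - dot u u * dot z w ^+2 - dot z z * dot u w ^+2 - dot w w * dot u z ^+2
  = det3 u z w ^+ 2 by rewrite /dot /det3; ring.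
rewrite hu hz hw !mul1r in key.
have := sqr_ge0 (det3 u z w). lra.
Qed.

Lemma tri_vec (R : realType) (u z w : 'rV[R]_3) :
  dot u u = 1 -> dot z z = 1 -> dot w w = 1 ->
  uang u w <= uang u z + uang z w.
Proof.
move=> hu hz hw; apply: tri_scalar; try exact: dot_bound.
exact: gram.
Qed.

Lemma add_vec (R : realType) (u w q : 'rV[R]_3) a b :
  dot u u = 1 -> dot w w = 1 -> dot q q = 1 -> 0 <= a -> 0 <= b ->
  lin3 q a u b w -> uang u w = uang u q + uang q w.
Proof.
move=> hu hw hq ha hb hl.
have e1 : dot u q = a + b * dot u w.
  by rewrite dotC (dot_lin3l _ hl) hu (dotC w u) mulr1.
have e2 : dot q w = a * dot u w + b by rewrite (dot_lin3l _ hl) hw mulr1.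
have e3 : a^+2 + b^+2 + 2*a*b*dot u w = 1.
  by rewrite -[RHS]hq (dot_lin3l q hl) e1 (dotC w q) e2; ring.
by rewrite /uang e1 e2; apply: add_scalar => //; apply: dot_bound.
Qed.

Lemma dot_pos_of_det (R : realType) (w x y : 'rV[R]_3) :
  det3 x y w != 0 -> 0 < dot w w.
Proof.
move=> hd; rewrite lt_def; apply/andP; split; last first.
  rewrite /dot; have := sqr_ge0 (w 0 0); have := sqr_ge0 (w 0 1);
  have := sqr_ge0 (w 0 2); rewrite !expr2; lra.
apply: contra hd => /eqP h.
have h0 : w 0 0 = 0.
  apply/eqP; rewrite -sqrf_eq0 eq_le sqr_ge0 andbT; move: h; rewrite /dot.
  have := sqr_ge0 (w 0 1); have := sqr_ge0 (w 0 2); rewrite !expr2; lra.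
have h1 : w 0 1 = 0.
  apply/eqP; rewrite -sqrf_eq0 eq_le sqr_ge0 andbT; move: h; rewrite /dot.
  have := sqr_ge0 (w 0 0); have := sqr_ge0 (w 0 2); rewrite !expr2; lra.
have h2 : w 0 2 = 0.
  apply/eqP; rewrite -sqrf_eq0 eq_le sqr_ge0 andbT; move: h; rewrite /dot.
  have := sqr_ge0 (w 0 1); have := sqr_ge0 (w 0 0); rewrite !expr2; lra.
by rewrite /det3 h0 h1 h2 !(mulr0, mul0r, subrr, addr0, subr0).
Qed.

Lemma chain (R : realType) (m : nat) : forall (x : nat -> 'rV[R]_3) (z : 'rV[R]_3),
  (1 <= m)%N ->
  dot z z = 1 -> (forall k, (k <= m)%N -> dot (x k) (x k) = 1) ->
  (forall k j, (k < m)%N -> (j <= m)%N -> j <> k -> j <> k.+1 ->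
     0 < det3 (x k) (x k.+1) (x j)) ->
  det3 (x 0%N) (x 1%N) z < 0 ->
  0 < det3 (x 0%N) z (x m) ->
  (forall k, (1 <= k < m)%N -> 0 < det3 z (x m) (x k)) ->
  \sum_(k < m) uang (x k) (x k.+1) <= uang (x 0%N) z + uang z (x m).
Proof.
elim: m => [//|m IH] x z _ hz hx hconv h1 h2 h3.
have hx0 := hx 0%N isT; have hx1 : dot (x 1%N) (x 1%N) = 1 by apply: hx.
case: m IH hx hconv h2 h3 => [|m] IH hx hconv h2 h3.
  by rewrite big_ord1; apply: tri_vec.
set M := m.+2.
have hxM : dot (x M) (x M) = 1 by apply: hx.
set a := det3 (x 0%N) (x 1%N) (x M).
set b := - det3 (x 0%N) (x 1%N) z.
set c := det3 z (x M) (x 0%N).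
set d := det3 z (x M) (x 1%N).
have ha : 0 < a by apply: hconv.
have hb : 0 < b by rewrite /b oppr_gt0.
have hc : 0 < c by rewrite /c -det3_cyc.
have hd : 0 < d by apply: h3.
set w := a *: z + b *: x M.
have lw1 : lin3 w a z b (x M) by rewrite /lin3 !mxE.
have lw2 : lin3 w c (x 1%N) (- d) (x 0%N).
  by rewrite /lin3 !mxE /a /b /c /d /det3; split; ring.
clearbody w.
have hdw : det3 (x 0%N) z w != 0.
  rewrite (det_lin3_3 _ _ lw1) det3_rep23 mulr0 add0r.
  by rewrite gt_eqF // mulr_gt0.
have hww := dot_pos_of_det hdw.
set N := Num.sqrt (dot w w).
have hN : 0 < N by rewrite sqrtr_gt0.
have hNN : N * N = dot w w by rewrite -expr2 sqr_sqrtr // ltW.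
set q := N^-1 *: w.
have lq1 : lin3 q (a / N) z (b / N) (x M).
  by case: lw1 => e0 e1 e2; rewrite /lin3 !mxE e0 e1 e2; split; field; lra.
have lq2 : lin3 q (c / N) (x 1%N) (- d / N) (x 0%N).
  by case: lw2 => e0 e1 e2; rewrite /lin3 !mxE e0 e1 e2; split; field; lra.
have hq : dot q q = 1.
  rewrite /q /dot !mxE.
  have -> : N^-1 * w 0 0 * (N^-1 * w 0 0) + N^-1 * w 0 1 * (N^-1 * w 0 1) +
     N^-1 * w 0 2 * (N^-1 * w 0 2) = dot w w / (N * N) by rewrite /dot; field; lra.
  by rewrite hNN divff // gt_eqF.
have lx1 : lin3 (x 1%N) (d / c) (x 0%N) (N / c) q.
  case: lq2 => e0 e1 e2; rewrite /lin3 e0 e1 e2; split; field; lra.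
have A1 : uang z (x M) = uang z q + uang q (x M).
  by apply: (add_vec _ _ _ _ _ lq1) => //; apply: divr_ge0; lra.
have A2 : uang (x 0%N) q = uang (x 0%N) (x 1%N) + uang (x 1%N) q.
  by apply: (add_vec _ _ _ _ _ lx1) => //; apply: divr_ge0; lra.
have T : uang (x 0%N) q <= uang (x 0%N) z + uang z q by apply: tri_vec.
have I : \sum_(k < m.+1) uang (x k.+1) (x k.+2) <= uang (x 1%N) q + uang q (x M).
  apply: (IH (fun k => x k.+1) q) => //.
  - by move=> k hk; apply: hx.
  - by move=> k j hk hj hjk hjk1; apply: hconv => // -[].
  - rewrite (det_lin3_3 _ _ lq2) det3_rep13 mulr0 add0r.
    have : 0 < det3 (x 1%N) (x 2%N) (x 0%N) by apply: hconv.
    move=> h; rewrite mulNr mulNr oppr_lt0; apply: mulr_gt0 => //.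
    by rewrite divr_gt0.
  - rewrite (det_lin3_2 _ _ lq2) det3_rep12 mulr0 add0r.
    rewrite det3_swap -/a mulrN -mulNr; apply: mulr_gt0 => //.
    by rewrite mulNr opprK divr_gt0.
  - move=> k hk; rewrite (det_lin3_1 _ _ lq1) det3_rep12 mulr0 addr0.
    apply: mulr_gt0; first by rewrite divr_gt0.
    by apply: h3; move: hk; rewrite /M; case/andP => hk1 hk2; apply/andP; split.
rewrite big_ord_recl /=.
have -> : \sum_(i < m.+1) uang (x (bump 0 i)) (x (bump 0 i).+1)
  = \sum_(k < m.+1) uang (x k.+1) (x k.+2) by [].
lra.
Qed.

Lemma modS_eq (n k : nat) : (k < n)%N -> (k.+1 %% n = if (k.+1 < n)%N then k.+1 else 0)%N.
Proof.
move=> hk; case: ifP => h; first by rewrite modn_small.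
by rewrite (_ : k.+1 = n) ?modnn //; lia.
Qed.

Lemma ordS2 (n : nat) (i : 'I_n) : (3 <= n)%N -> ordS (ordS i) != i /\ ordS (ordS i) != ordS i.
Proof.
move=> hn; have hi := ltn_ord i.
have hn0 : (0 < n)%N by lia.
split; apply/eqP => /(congr1 val) /=; rewrite (modS_eq hi) modS_eq ?ltn_pmod //;
  rewrite ?(modS_eq hi); case: (boolP (i.+1 < n)%N) => h1; rewrite ?h1 ?(negbTE h1) /=; try (case: ifP => h2); lia.
Qed.

Lemma det3_N1 (R : realType) (x y z : 'rV[R]_3) : det3 (- x) y z = - det3 x y z.
Proof. rewrite /det3 !mxE; ring. Qed.
Lemma det3_N2 (R : realType) (x y z : 'rV[R]_3) : det3 x (- y) z = - det3 x y z.
Proof. rewrite /det3 !mxE; ring. Qed.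
Lemma det3_N3 (R : realType) (x y z : 'rV[R]_3) : det3 x y (- z) = - det3 x y z.
Proof. rewrite /det3 !mxE; ring. Qed.
Lemma dot_N1 (R : realType) (x y : 'rV[R]_3) : dot (- x) y = - dot x y.
Proof. rewrite /dot !mxE; ring. Qed.
Lemma dot_N2 (R : realType) (x y : 'rV[R]_3) : dot x (- y) = - dot x y.
Proof. rewrite /dot !mxE; ring. Qed.

Lemma uang_N2 (R : realType) (x y : 'rV[R]_3) : dot x x = 1 -> dot y y = 1 ->
  uang x (- y) = pi - uang x y.
Proof. by move=> hx hy; rewrite /uang dot_N2 acosN // dot_bound. Qed.

Lemma perim (R : realType) (n : nat) (p : 'I_n -> 'rV[R]_3) :
  (3 <= n)%N -> (forall i, dot (p i) (p i) = 1) ->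
  (forall i j : 'I_n, j != i -> j != ordS i -> 0 < det3 (p i) (p (ordS i)) (p j)) ->
  \sum_(i < n) uang (p i) (p (ordS i)) <= 2 * pi.
Proof.
case: n p => [|[|[|n']]] p // _ hu hc.
pose pn k := p (inord k).
have pE : forall i : 'I_(n'.+3), p i = pn i by move=> i; rewrite /pn inord_val.
have hun : forall k, dot (pn k) (pn k) = 1 by move=> k; apply: hu.
have SE : forall k, (k < n'.+2)%N -> ordS (inord k : 'I_(n'.+3)) = inord k.+1.
  move=> k hk; apply: val_inj; rewrite /= !inordK //; try lia.
  by rewrite modn_small.
have SL : ordS (inord n'.+2 : 'I_(n'.+3)) = inord 0.
  by apply: val_inj; rewrite /= !inordK // modnn.
have hcn : forall a b, (a < n'.+2)%N -> (b < n'.+3)%N -> b <> a -> b <> a.+1 ->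
    0 < det3 (pn a) (pn a.+1) (pn b).
  move=> a b ha hb h1 h2; rewrite /pn -SE //; apply: hc.
    by apply/eqP => /(congr1 val) /=; rewrite !inordK //; lia.
  by rewrite SE //; apply/eqP => /(congr1 val) /=; rewrite !inordK //; lia.
have hcl : forall b, (0 < b < n'.+2)%N -> 0 < det3 (pn n'.+2) (pn 0) (pn b).
  move=> b hb; rewrite /pn -SL; apply: hc.
    by apply/eqP => /(congr1 val) /=; rewrite !inordK //; lia.
  by rewrite SL; apply/eqP => /(congr1 val) /=; rewrite !inordK //; lia.
rewrite big_ord_recr /=.
have -> : \sum_(i < n'.+2) uang (p (widen_ord (leqnSn n'.+2) i))
             (p (ordS (widen_ord (leqnSn n'.+2) i)))
        = \sum_(i < n'.+2) uang (pn i) (pn i.+1).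
  apply: eq_bigr => i _.
  have hi := ltn_ord i.
  have -> : widen_ord (leqnSn n'.+2) i = inord i by apply: val_inj; rewrite /= inordK //; lia.
  by rewrite SE.
have -> : (ord_max : 'I_(n'.+3)) = inord n'.+2 by apply: val_inj; rewrite /= inordK.
rewrite SL big_ord_recl /=.
have -> : \sum_(i < n'.+1) uang (pn (bump 0 i)) (pn (bump 0 i).+1)
        = \sum_(k < n'.+1) uang ((fun k => pn k.+1) k) ((fun k => pn k.+1) k.+1) by [].
have H : \sum_(k < n'.+1) uang (pn k.+1) (pn k.+2) <=
    uang (pn 1%N) (- pn 0%N) + uang (- pn 0%N) (pn n'.+2).
  apply: (@chain R n'.+1 (fun k => pn k.+1) (- pn 0%N)) => //.
  - by rewrite dot_N1 dot_N2 opprK hun.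
  - move=> k j hk hj h1 h2; apply: hcn; lia.
  - by rewrite det3_N3 oppr_lt0; apply: hcn.
  - by rewrite det3_N2 -det3_swap; apply: hcn.
  - move=> k hk; rewrite det3_N1 -det3_swap; apply: hcl; lia.
change (p (inord n'.+2)) with (pn n'.+2); change (p (inord 0)) with (pn 0%N).
move: H; rewrite uang_N2 // (uangC (- pn 0%N)) uang_N2 //.
have := uangC (pn 1%N) (pn 0%N); have := uangC (pn 0%N) (pn n'.+2). lra.
Qed.

Lemma acos_lt (R : realType) (x y : R) : -1 <= x <= 1 -> -1 <= y <= 1 ->
  x < y -> acos y < acos x.
Proof.
move=> hx hy hxy; rewrite ltNge; apply/negP => H.
have := ltr_cos (acos_in hy) (acos_in hx).
rewrite !acosK ?in_itv //= hxy => /esym; rewrite ltNge H //.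
Qed.

Lemma enorm_dot (R : realType) (u : 'rV[R]_3) : enorm u = Num.sqrt (dot u u).
Proof.
have e0 : (ord0 : 'I_3) = 0 by apply: val_inj.
have e1 : (lift ord0 ord0 : 'I_3) = 1 by apply: val_inj.
have e2 : (lift ord0 (lift ord0 ord0) : 'I_3) = 2 by apply: val_inj.
by rewrite /enorm /dot !big_ord_recl big_ord0 addr0 !expr2 addrA e0 e1 e2.
Qed.

Lemma dot_ge0 (R : realType) (u : 'rV[R]_3) : 0 <= dot u u.
Proof.
rewrite /dot; have := sqr_ge0 (u 0 0); have := sqr_ge0 (u 0 1);
have := sqr_ge0 (u 0 2); rewrite !expr2; lra.
Qed.

Lemma enorm_sqr (R : realType) (u : 'rV[R]_3) : enorm u ^+ 2 = dot u u.
Proof. by rewrite enorm_dot sqr_sqrtr // dot_ge0. Qed.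

Lemma dot_radproj (R : realType) (u w : 'rV[R]_3) : 0 < enorm u -> 0 < enorm w ->
  dot (radproj u) (radproj w) = dot u w / (enorm u * enorm w).
Proof.
move=> hu hw; rewrite /radproj /dot !mxE; field.
by apply/andP; split; rewrite gt_eqF.
Qed.

Lemma radproj_unit (R : realType) (u : 'rV[R]_3) : 0 < enorm u ->
  dot (radproj u) (radproj u) = 1.
Proof.
move=> hu; rewrite dot_radproj // -enorm_sqr expr2 divff //.
by rewrite mulf_neq0 // gt_eqF.
Qed.

Lemma cos_pi4 (R : realType) : 0 < cos (pi / 4 : R) /\ cos (pi / 4 : R) ^+ 2 = 1 / 2.
Proof.
have hp := @pi_gt0 R.
split.
  by apply: cos_gt0_pihalf; apply/andP; split; lra.
have := cos_mulr2n (pi / 4 : R).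
have -> : (pi / 4 : R) *+ 2 = pi / 2 by rewrite mulr2n; field.
rewrite cos_pihalf mulr2n => h; lra.
Qed.

Lemma sep_angle (R : realType) (v w : 'rV[R]_3) :
  2 <= enorm v <= 251 / 100 -> 2 <= enorm w <= 251 / 100 -> 2 <= edist v w ->
  pi / 4 < uang (radproj v) (radproj w).
Proof.
move=> /andP[hv1 hv2] /andP[hw1 hw2] hd.
have hv : 0 < enorm v by lra.
have hw : 0 < enorm w by lra.
have hvv := enorm_sqr v; have hww := enorm_sqr w.
have hvw : dot (v - w) (v - w) = dot v v + dot w w - 2 * dot v w.
  rewrite /dot !mxE; ring.
have h4 : 4 <= dot (v - w) (v - w).
  move: hd; rewrite /edist -enorm_sqr; set s := enorm (v - w) => hs.
  rewrite expr2; nra.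
have hX : dot v w <= 7 / 10 * (enorm v * enorm w).
  have : (enorm v)^+2 + (enorm w)^+2 - 14 / 10 * enorm v * enorm w <= 4.
    nra.
  lra.
have hX' : dot (radproj v) (radproj w) <= 7 / 10.
  rewrite dot_radproj // ler_pdivrMr ?mulr_gt0 //.
have [hc1 hc2] := cos_pi4 R.
have hC : 7 / 10 < cos (pi / 4 : R) by nra.
have hp := @pi_gt0 R.
have -> : pi / 4 = acos (cos (pi / 4 : R)).
  by rewrite cosK // in_itv /=; apply/andP; split; lra.
apply: acos_lt.
- by apply: dot_bound; apply: radproj_unit.
- exact: cos_in.
- lra.
Qed.

Theorem lemma5p1p2 (R : realType) (Lam : 'rV[R]_3 -> Prop) (n : nat)
    (v : 'I_n -> 'rV[R]_3) :
  packing_with_origin Lam ->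
  (forall i, Lam (v i)) ->
  (forall i, 2 <= enorm (v i) <= 251 / 100) ->
  convex_spherical_polygon (fun i => radproj (v i)) ->
  (n <= 7)%N.
Proof.
move=> [hL0 hsep] hvL hnv [hn3 hor].
pose p := fun i => radproj (v i).
have hpos : forall i, 0 < enorm (v i).
  by move=> i; have /andP[h1 _] := hnv i; lra.
have hu : forall i, dot (p i) (p i) = 1 by move=> i; apply: radproj_unit.
have hsum : \sum_(i < n) uang (p i) (p (ordS i)) <= 2 * pi.
  case: hor => hor; first exact: perim.
  have := @perim R n (fun i => - p i) hn3.
  rewrite (eq_bigr (fun i => uang (p i) (p (ordS i)))); last first.
    by move=> i _; rewrite /uang dot_N1 dot_N2 opprK.
  apply.
    by move=> i; rewrite dot_N1 dot_N2 opprK.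
  by move=> i j h1 h2; rewrite det3_N1 det3_N2 det3_N3 opprK oppr_gt0; apply: hor.
have hlow : forall i, pi / 4 < uang (p i) (p (ordS i)).
  move=> i; apply: sep_angle => //; apply: hsep => // he.
  have [j1 j2] := ordS2 i hn3.
  have : det3 (p i) (p (ordS i)) (p (ordS (ordS i))) = 0.
    by rewrite /p he det3_rep12.
  case: hor => /(_ i _ j1 j2) h; lra.
have hn0 : (0 < n)%N by lia.
have hlt : \sum_(i < n) (pi / 4 : R) < \sum_(i < n) uang (p i) (p (ordS i)).
  apply: ltr_sum => //.
  by apply/hasP; exists (Ordinal hn0); rewrite ?mem_index_enum.
have h := lt_le_trans hlt hsum.
move: h; rewrite sumr_const card_ord => h.
have hp := @pi_gt0 R.
have : (n%:R : R) < 8.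
  rewrite -mulr_natr in h; nra.
by move=> h8; rewrite -ltnS -(ltr_nat R).
Qed.
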